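(* Among all phylogenetic trees with $n$ leaves, the ones with maximum total cophenetic index are exactly the rooted caterpillars, and for a rooted caterpillar $K_n$ with $n$ leaves, $\Phi(K_n)=\binom{n}{3}$.
   Context: A phylogenetic tree with $n$ leaves is a rooted tree whose leaves are bijectively labeled by $\{1,\dots,n\}$, every internal node having at least two children; binary means every internal node has exactly two children. A rooted caterpillar is a binary phylogenetic tree all of whose internal nodes have a leaf child. The depth $\delta_T(v)$ is the number of arcs from the root to $v$; for leaves $i,j$, $\varphi_T(i,j)=\delta_T(LCA_T(i,j))$ ($LCA$ = lowest common ancestor), and $\Phi(T)=\sum_{1\le i<j\le n}\varphi_T(i,j)$ is the total cophenetic index. *)

(* Defs.v *)
From mathcomp Require Import all_boot.
Set Implicit Arguments. Unset Strict Implicit. Unset Printing Implicit Defensive.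

Inductive tree : Type := Leaf of nat | Node of seq tree.

Definition is_leaf (t : tree) : bool := if t is Leaf _ then true else false.

Fixpoint leaves (t : tree) : seq nat :=
  match t with
  | Leaf a => [:: a]
  | Node ts => flatten (map leaves ts)
  end.

Fixpoint wf_tree (t : tree) : bool :=
  match t with
  | Leaf _ => true
  | Node ts => (2 <= size ts) && all wf_tree ts
  end.

Definition phylo (n : nat) (t : tree) : bool :=
  wf_tree t && perm_eq (leaves t) (iota 1 n).

Fixpoint binary (t : tree) : bool :=
  match t with
  | Leaf _ => true
  | Node ts => (size ts == 2) && all binary ts
  end.

Fixpoint internal_have_leaf_child (t : tree) : bool :=
  match t with
  | Leaf _ => true
  | Node ts => has is_leaf ts && all internal_have_leaf_child ts
  end.

Definition rooted_caterpillar (t : tree) : bool :=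
  binary t && internal_have_leaf_child t.

(* phi t i j = depth (number of arcs from the root) of LCA_t(i,j),
   for leaves i, j of t (labels unique). *)
Fixpoint phi (t : tree) (i j : nat) : nat :=
  match t with
  | Leaf _ => 0
  | Node ts =>
      foldr (fun c acc => if (i \in leaves c) && (j \in leaves c)
                          then (phi c i j).+1 else acc) 0 ts
  end.

Definition Phi (n : nat) (t : tree) : nat :=
  \sum_(1 <= j < n.+1) \sum_(1 <= i < j) phi t i j.

(* Main.v *)
Require Import Defs.
From mathcomp Require Import all_boot.
From mathcomp Require Import zify.
Set Implicit Arguments. Unset Strict Implicit. Unset Printing Implicit Defensive.

Definition tree_ind2 (P : tree -> Prop) (HL : forall a, P (Leaf a))
  (HN : forall ts, (forall c, List.In c ts -> P c) -> P (Node ts)) : forall t, P t :=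
  fix IH (t : tree) : P t :=
  match t with
  | Leaf a => HL a
  | Node ts => HN ts ((fix g (l : seq tree) : forall c, List.In c l -> P c :=
      match l with
      | [::] => fun c (H : List.In c [::]) => False_ind _ H
      | c' :: l' => fun c H => match H with
                   | or_introl e => eq_ind c' P (IH c') c e
                   | or_intror H' => g l' c H' end
      end) ts)
  end.

Lemma phi_sym t i j : phi t i j = phi t j i.
Proof.
elim/tree_ind2: t => [a|ts IH] //=.
elim: ts IH => //= c ts IHts IH.
rewrite andbC IH; last by left.
by rewrite IHts // => c' H; apply: IH; right.
Qed.

Lemma phi_notin t i j : i \notin leaves t -> phi t i j = 0.
Proof.
case: t => [a|ts] //=.
elim: ts => //= c ts IHts; rewrite mem_cat negb_or => /andP[Hc Hts].
by rewrite (negbTE Hc) /= IHts.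
Qed.

Lemma phi_notin_r t i j : j \notin leaves t -> phi t i j = 0.
Proof. by rewrite phi_sym; apply: phi_notin. Qed.

Fixpoint F (t : tree) : nat :=
  match t with
  | Leaf _ => 0
  | Node ts => sumn (map (fun c => F c + 'C(size (leaves c), 2)) ts)
  end.

Lemma F_cons c ts : F (Node (c :: ts)) = F c + 'C(size (leaves c), 2) + F (Node ts).
Proof. by []. Qed.

Definition D t := \sum_(i <- leaves t) \sum_(j <- leaves t | j != i) phi t i j.

Lemma bin2E m : 'C(m, 2) * 2 = m * m.-1.
Proof. by rewrite (bin_ffact m 2) ffactnS ffactn1. Qed.

Lemma sum_const_seq (s : seq nat) k : \sum_(i <- s) k = size s * k.
Proof. by elim: s => [|a s IH]; rewrite ?big_nil ?big_cons ?IH //= mulSn. Qed.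

Lemma D_cons c ts : uniq (leaves c ++ leaves (Node ts)) ->
  D (Node (c :: ts)) = D c + size (leaves c) * (size (leaves c)).-1 + D (Node ts).
Proof.
set lc := leaves c; set lr := leaves (Node ts) => U.
have := U; rewrite cat_uniq => /and3P[Uc Hd Ur].
have dis1 : forall i, i \in lr -> i \notin lc.
  by move=> i Hi; apply/negP => Hc; move/hasP: Hd; apply; exists i.
have dis2 : forall i, i \in lc -> i \notin lr.
  by move=> i Hi; apply/negP => Hr; move: (dis1 i Hr); rewrite Hi.
rewrite /D.
have -> : leaves (Node (c :: ts)) = lc ++ lr by [].
rewrite big_cat /=; congr (_ + _).
- rewrite (eq_big_seq (fun i => \sum_(j <- lc | j != i) (phi c i j + 1))); last first.
    move=> i Hi; rewrite big_cat /= [X in _ + X]big1_seq ?addn0; last first.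
      move=> j /andP[_ Hj] /=; rewrite (negbTE (dis1 _ Hj)) andbF.
      exact: (@phi_notin (Node ts) i j (dis2 _ Hi)).
    rewrite big_seq_cond [RHS]big_seq_cond; apply: eq_bigr => j /andP[Hj _] /=.
    by rewrite Hi Hj addn1.
  rewrite (eq_big_seq (fun i => \sum_(j <- lc | j != i) phi c i j + (size lc).-1)).
    by rewrite big_split /= sum_const_seq.
  move=> i Hi; rewrite big_split /= sum1_count; congr (_ + _).
  have := count_predC (pred1 i) lc; rewrite count_uniq_mem // Hi /=.
  by rewrite add1n => <-.
- apply: eq_big_seq => i Hi; rewrite big_cat /= big1_seq ?add0n; last first.
    move=> j /andP[_ Hj] /=; rewrite (negbTE (dis1 _ Hi)) /=.
    exact: (@phi_notin_r (Node ts) i j (dis2 _ Hj)).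
  rewrite big_seq_cond [RHS]big_seq_cond; apply: eq_bigr => j /andP[Hj _] /=.
  by rewrite (negbTE (dis1 _ Hi)).
Qed.

Lemma D_F t : uniq (leaves t) -> D t = 2 * F t.
Proof.
elim/tree_ind2: t => [a|ts IH] U; first by rewrite /D /= !big_cons !big_nil eqxx.
elim: ts IH U => [|c ts IHts] IH U; first by rewrite /D /= big_nil.
have U' : uniq (leaves c ++ leaves (Node ts)) by [].
rewrite D_cons // F_cons IHts; last by move: U'; rewrite cat_uniq => /and3P[].
  2: by move=> c' H; apply: IH; right.
rewrite IH; last by move: U'; rewrite cat_uniq => /and3P[]. 2: by left.
have := bin2E (size (leaves c)); lia.
Qed.
Lemma sym_pairs (f : nat -> nat -> nat) (fs : forall i j, f i j = f j i) n :
  \sum_(1 <= i < n.+1) \sum_(1 <= j < n.+1 | j != i) f i j =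
  2 * \sum_(1 <= j < n.+1) \sum_(1 <= i < j) f i j.
Proof.
have E : forall j, j \in index_iota 1 n.+1 ->
   \sum_(1 <= i < j) f i j = \sum_(1 <= i < n.+1 | i < j) f i j.
  move=> j; rewrite mem_index_iota => /andP[_ Hj].
  by rewrite (big_nat_widen _ _ _ _ _ (ltnW Hj)).
rewrite (eq_big_seq _ E) mul2n -addnn.
rewrite (eq_bigr (fun i => \sum_(1 <= j < n.+1 | j < i) f i j +
                             \sum_(1 <= j < n.+1 | i < j) f i j)); last first.
  move=> i _; rewrite (bigID (fun j => j < i)) /=; congr (_ + _); apply: eq_bigl => j.
    by case: ltngtP.
  by case: ltngtP.
rewrite big_split /=; congr (_ + _).
  by apply: eq_bigr => i _; apply: eq_bigr => j _; rewrite fs.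
rewrite (eq_bigr (fun i => \sum_(1 <= j < n.+1) (if i < j then f i j else 0))); last first.
  by move=> i _; rewrite big_mkcond.
rewrite exchange_big; apply: eq_bigr => j _; by rewrite [RHS]big_mkcond.
Qed.

Lemma Phi_F n T : phylo n T -> Phi n T = F T.
Proof.
case/andP => _ P.
have U : uniq (leaves T) by rewrite (perm_uniq P) iota_uniq.
have := D_F U; rewrite /D (perm_big _ P).
rewrite (eq_bigr (fun i => \sum_(j <- iota 1 n | j != i) phi T i j)); last first.
  by move=> i _; rewrite (perm_big _ P).
have -> : iota 1 n = index_iota 1 n.+1 by rewrite /index_iota subSS subn0.
rewrite sym_pairs; last exact: phi_sym.
rewrite /Phi; lia.
Qed.
Definition hh m := m.+1 * m * m.-1.
Definition HH m := m * m.-1 * m.-2.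

Lemma HH_hh m : HH m + 3 * (m * m.-1) = hh m.
Proof. case: m => [|[|m]] //; rewrite /HH /hh /=; nia. Qed.

Lemma hh_add x y : hh x + hh y <= hh (x + y).
Proof. case: x => [|x]; case: y => [|y]; rewrite /hh ?addn0 ?add0n //= ?addSn ?addnS /=; nia. Qed.

Lemma hh_add_lt x y : 0 < x -> 0 < y -> hh x + hh y < hh (x + y).
Proof. case: x => [|x]; case: y => [|y] // _ _; rewrite /hh addSn addnS /=; nia. Qed.

Lemma superadd (l : seq nat) : all (fun a => 0 < a) l ->
  sumn (map hh l) <= hh (sumn l) /\ (sumn (map hh l) = hh (sumn l) <-> size l <= 1).
Proof.
elim: l => [|a l IH] /=; first by [].
move/andP=> [Ha Hl]; have [Hle Hiff] := IH Hl.
case: l Hl Hle Hiff {IH} => [|b l] /= Hl Hle Hiff.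
  by rewrite /hh /= !addn0.
have Hb : 0 < b by case/andP: Hl.
have := hh_add_lt (x := a) (y := b + sumn l) Ha ltac:(lia).
lia.
Qed.

Lemma two a b : 0 < a -> 0 < b ->
  hh a + hh b <= HH (a + b) /\ (hh a + hh b = HH (a + b) <-> a = 1 \/ b = 1).
Proof.
case: a => [|x] // _; case: b => [|y] // _.
have E : hh x.+1 + hh y.+1 + 3 * (x * y * (x + y + 2)) = HH (x.+1 + y.+1).
  rewrite /hh /HH addSn addnS /=; nia.
case: x E => [|x] E; first by lia.
case: y E => [|y] E; first by lia.
move: E; set p := x.+1 * y.+1 * _ => E.
have Hp : 0 < p by rewrite /p !muln_gt0.
move: p Hp E => p Hp E; lia.
Qed.

Lemma size_Node ts : size (leaves (Node ts)) = sumn (map (fun c => size (leaves c)) ts).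
Proof. by elim: ts => //= c ts IH; rewrite size_cat -IH. Qed.

Lemma wf_pos t : wf_tree t -> 0 < size (leaves t).
Proof.
elim/tree_ind2: t => [a|ts IH] //.
case: ts IH => [|c ts] IH //= /andP[_ /andP[wc _]]; rewrite size_cat.
have := IH c (or_introl erefl) wc; lia.
Qed.

Lemma wf_leaf t : wf_tree t -> (size (leaves t) = 1 <-> is_leaf t).
Proof.
case: t => [a|ts] //.
case: ts => [|c1 [|c2 r]] //= /andP[w1 /andP[w2 _]].
rewrite !size_cat; have := wf_pos w1; have := wf_pos w2; split => //; lia.
Qed.

Lemma all_pos s : all wf_tree s -> all (fun a => 0 < a) (map (fun c => size (leaves c)) s).
Proof. elim: s => //= c s IHs /andP[wc ws]; rewrite wf_pos //=; exact: IHs. Qed.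

Definition S ts := sumn (map (fun c => hh (size (leaves c))) ts).

Lemma forest ts :
  (forall c, List.In c ts -> wf_tree c -> 6 * F c <= HH (size (leaves c)) /\
      (6 * F c = HH (size (leaves c)) <-> rooted_caterpillar c)) ->
  all wf_tree ts ->
  6 * F (Node ts) <= S ts /\ (6 * F (Node ts) = S ts <-> all rooted_caterpillar ts).
Proof.
elim: ts => [|c ts IHts] IH; first by [].
move/andP=> [wc wts].
have [h1 h2] := IH c (or_introl erefl) wc.
have [h3 h4] := IHts (fun c' H => IH c' (or_intror H)) wts.
rewrite F_cons.
have := HH_hh (size (leaves c)); have := bin2E (size (leaves c)).
have -> : S (c :: ts) = hh (size (leaves c)) + S ts by [].
move=> B1 B2.
split; first by lia.
split => [E|/andP[r1 r2]].
  apply/andP; split; [apply/h2|apply/h4]; lia.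
have := proj2 h2 r1; have := proj2 h4 r2; lia.
Qed.

Lemma all_rc ts : all rooted_caterpillar ts =
  all binary ts && all internal_have_leaf_child ts.
Proof.
elim: ts => //= c ts ->; rewrite /rooted_caterpillar.
by case: (binary c); case: (internal_have_leaf_child c); case: (all binary ts);
  case: (all internal_have_leaf_child ts).
Qed.

Lemma chain (x S a b c H : nat) : x <= S -> S = a + b -> b <= c -> a + c <= H ->
  (x = H <-> x = S /\ b = c /\ a + c = H) /\ x <= H.
Proof. lia. Qed.

Lemma key t : wf_tree t -> 6 * F t <= HH (size (leaves t)) /\
  (6 * F t = HH (size (leaves t)) <-> rooted_caterpillar t).
Proof.
elim/tree_ind2: t => [a|ts IH] W; first by [].
have W' := W; have /andP[Hs Wts] : (2 <= size ts) && all wf_tree ts := W; clear W.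
have [f1 f2] := forest IH Wts.
have rcE : rooted_caterpillar (Node ts) =
    (size ts == 2) && has is_leaf ts && all rooted_caterpillar ts.
  rewrite all_rc /rooted_caterpillar /=.
  by case: (size ts == 2); case: (all binary ts); case: (has is_leaf ts);
    case: (all internal_have_leaf_child ts).
case: ts Hs Wts IH f1 f2 rcE W' => [|c1 [|c2 r]] // _ Wts IH f1 f2 rcE W'.
rewrite rcE.
have /andP[w1 Wr] : wf_tree c1 && all wf_tree (c2 :: r) := Wts.
set l := map (fun c => size (leaves c)) (c2 :: r).
have lpos : all (fun a => 0 < a) l.
  exact: all_pos.
have [s1 s2] := superadd lpos.
have SE : S (c1 :: c2 :: r) = hh (size (leaves c1)) + sumn (map hh l).
  by rewrite /S /l /= -map_comp.
have ME : size (leaves (Node (c1 :: c2 :: r))) =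
    size (leaves c1) + sumn l by rewrite /l -size_Node [LHS]/= size_cat.
have Mpos : 0 < sumn l by move: lpos; rewrite /l /= => /andP[h _]; lia.
have [t1 t2] := two (wf_pos w1) Mpos.
have [Ch Cle] := chain f1 SE s1 t1.
rewrite ME; split; first exact: Cle.
rewrite Ch f2 s2 t2.
have lD : l = map (fun c => size (leaves c)) (c2 :: r) by [].
clearbody l.
clear Ch Cle f1 f2 s1 s2 t1 t2 SE ME IH rcE W' Mpos lpos.
destruct r as [|c3 r].
- have w2 : wf_tree c2 by move: Wr => /= /andP[].
  rewrite lD /= addn0 (wf_leaf w1) (wf_leaf w2).
  case: (is_leaf c1); case: (is_leaf c2); case: (rooted_caterpillar c1);
    case: (rooted_caterpillar c2) => /=; intuition.
- rewrite lD /=.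
  split; first by case=> _ [].
  by [].
Qed.

Fixpoint cat (k : nat) : tree :=
  match k with 0 => Leaf 1 | k'.+1 => Node [:: cat k'; Leaf k'.+2] end.

Lemma cat_leaves k : leaves (cat k) = iota 1 k.+1.
Proof.
elim: k => [|k IH] //; rewrite [LHS]/= IH.
by have := iotaD 1 k.+1 1; rewrite addn1 => ->.
Qed.

Lemma cat_ok k : phylo k.+1 (cat k) /\ rooted_caterpillar (cat k).
Proof.
split; first rewrite /phylo cat_leaves perm_refl andbT.
  by elim: k => //= k ->.
rewrite /rooted_caterpillar; elim: k => //= k /andP[-> ->] /=.
by rewrite orbT.
Qed.

Lemma binC3 n : 'C(n, 3) * 6 = HH n.
Proof. by rewrite (bin_ffact n 3) ffactnS ffactnS ffactn1 /HH mulnA. Qed.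

Theorem mainTheorem7 (n : nat) :
  (forall T : tree, phylo n T ->
     ((forall T' : tree, phylo n T' -> Phi n T' <= Phi n T) <-> rooted_caterpillar T))
  /\
  (forall K : tree, phylo n K -> rooted_caterpillar K -> Phi n K = 'C(n, 3)).
Proof.
have sz : forall T, phylo n T -> size (leaves T) = n.
  by move=> T /andP[_ P]; rewrite (perm_size P) size_iota.
have wf : forall T, phylo n T -> wf_tree T by move=> T /andP[].
have P2 : forall K : tree, phylo n K -> rooted_caterpillar K -> Phi n K = 'C(n, 3).
  move=> K PK RK; rewrite Phi_F //.
  have [_ [_ /(_ RK) E]] := key (wf _ PK); rewrite sz // in E; rewrite -binC3 in E |- *; lia.
split => // T PT; split => [Hmax|RT].
  have n0 : 0 < n by rewrite -(sz _ PT); apply: wf_pos; exact: wf.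
  have [PK RK] := cat_ok n.-1; rewrite prednK // in PK.
  have := Hmax _ PK; rewrite (P2 _ PK RK) Phi_F //.
  have [H1 H2] := key (wf _ PT); rewrite sz // in H1 H2.
  have := binC3 n => E Hle; apply/H2; lia.
move=> T' PT'; rewrite (P2 _ PT RT) Phi_F //.
have [H1 _] := key (wf _ PT'); rewrite sz // in H1.
have := binC3 n; lia.
Qed.
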